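(* Let $\{\mathbb{X},\mathscr{W},\mathbf{p}\}$ be an iterated function system in the class $\Xi$. For every $\mathbf{i}=(i_1,i_2,\dots)\in\mathcal{S}$ and every $x\in\mathbb{X}$, the limit $\lim_{n\to\infty}w_{i_1}\circ\cdots\circ w_{i_n}(x)$ exists, and it does not depend on $x$. Thus $\pi$ is well-defined on $\mathcal{S}$.
   Context: Setting: $\mathbb{X}\subset\mathbb{R}^d$ and $M$ is a finite or countably infinite index set. The maps are $w_i:\mathbb{X}\to\mathbb{X}$ for $i\in M$, and $\mathbf{p}=\{p_i\}$ is a probability vector with all $p_i>0$. Bi-Lipschitz: each $w_i$ satisfies $\gamma_i|x-y|\le|w_i(x)-w_i(y)|\le\Gamma_i|x-y|$ for all $x,y\in\mathbb{X}$, with $0<\gamma_i<\Gamma_i$. Average contractivity: there is $x\in\mathbb{X}$ with $\sum_i p_i\Gamma_i<\infty$, $\sum_i p_i|w_i(x)-x|<\infty$, and $-\infty<\sum_i p_i\log\Gamma_i<0$. The class $\Xi$ consists of the IFS with bi-Lipschitz, average contracting maps satisfying $\sum_i p_i\log p_i>-\infty$. Symbolic space: $M^\infty$ carries the cylinder topology, its Borel $\sigma$-algebra $\mathscr{B}(M^\infty)$, the product measure $\mathbb{P}=\mathbf{p}^{\otimes\mathbb{N}}$, and the left shift $\sigma$. For $A\subset M^\infty$ let $\delta_{\mathbf{i}}(A,n)=\mathrm{card}(A\cap\{\sigma^k(\mathbf{i})\}_{k=0}^{n-1})$. Define \[ \mathcal{S}_0=\{\mathbf{i}:\ \lim_n \tfrac1n\delta_{\mathbf{i}}(A,n)=\mathbb{P}(A)\text{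 for all }A\in\mathscr{B}(M^\infty)\}. \] For a function $X:M\to\mathbb{R}$ with finite mean $\mathbb{E}X=\sum_i p_iX_i$, let $\mathcal{N}(X)=\{\mathbf{i}:\lim_n\frac1n\sum_{k=1}^nX_{i_k}=\mathbb{E}X\}$. Then \[ \mathcal{S}=\mathcal{S}_0\cap\mathcal{N}(X^1)\cap\mathcal{N}(X^2)\cap\mathcal{N}(X^3), \] where $X^1_i=|w_i(x)-x|$ (for a fixed point $x$; its mean is finite), $X^2_i=\log\Gamma_i$, and $X^3_i=\log p_i$. *)

(* Defs.v *)
From mathcomp Require Import all_boot all_order all_algebra.
From mathcomp Require Import all_classical all_reals all_analysis.
Import numFieldNormedType.Exports.
Import Order.TTheory GRing.Theory Num.Theory.
Set Implicit Arguments. Unset Strict Implicit. Unset Printing Implicit Defensive.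
Local Open Scope classical_set_scope.
Local Open Scope ring_scope.

Definition enorm (R : realType) (d : nat) (v : 'rV[R]_d) : R :=
  Num.sqrt (\sum_(j < d) v ord0 j ^+ 2).

(* When the positive parts are summable this is the value of the series in
   [-oo, +oo). *)
Definition esumR (R : realType) (M : choiceType) (f : M -> R) : \bar R :=
  (\esum_(i in [set: M]) (Num.max (f i) 0)%:E
   - \esum_(i in [set: M]) (Num.max (- f i) 0)%:E)%E.

Definition mean (R : realType) (M : choiceType) (p X : M -> R) : R :=
  fine (esumR (fun i => p i * X i)).

(* Symbolic space M^oo: sequences i = (i_1, i_2, ...) encoded as i : nat -> M
   with i_{k+1} = i k. *)
Definition shift (M : Type) (i : nat -> M) : nat -> M := fun j => i j.+1.

Definition cylinder (M : Type) (a : seq M) : set (nat -> M) :=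
  [set i | mkseq i (size a) = a].

Definition cylinders (M : Type) : set (set (nat -> M)) :=
  [set C | exists a : seq M, C = cylinder a].

(* M^oo with its Borel sigma-algebra for the cylinder topology, i.e. the
   sigma-algebra generated by the cylinders (M countable, discrete). *)
Definition symb_space (M : pointedType) := g_sigma_algebraType (@cylinders M).

Definition visits (M : Type) (A : set (nat -> M)) (i : nat -> M) (n : nat)
  : nat := count (fun k => `[< A (iter k (@shift M) i) >]) (iota 0 n).

Definition S0 (R : realType) (M : pointedType)
  (P : probability (symb_space M) R) : set (nat -> M) :=
  [set i : nat -> M | forall A : set (symb_space M), measurable A ->
     ((visits A i n)%:R / n%:R)%:E @[n --> \oo] --> P A].

Definition Nset (R : realType) (M : choiceType) (p X : M -> R)
  : set (nat -> M) :=
  [set i : nat -> M | (\sum_(k < n) X (i k)) / n%:R @[n --> \oo] --> mean p X].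

Definition Sset (R : realType) (d : nat) (M : pointedType)
  (w : M -> 'rV[R]_d -> 'rV[R]_d) (p Gam : M -> R) (x0 : 'rV[R]_d)
  (P : probability (symb_space M) R) : set (nat -> M) :=
  S0 P `&` Nset p (fun m => enorm (w m x0 - x0))
       `&` Nset p (fun m => ln (Gam m)) `&` Nset p (fun m => ln (p m)).

Definition comp_seq (R : realType) (d : nat) (M : Type)
  (w : M -> 'rV[R]_d -> 'rV[R]_d) (i : nat -> M) (n : nat) (x : 'rV[R]_d)
  : 'rV[R]_d := foldr (fun k y => w (i k) y) x (iota 0 n).

(* Main.v *)
Require Import Defs.
From mathcomp Require Import all_boot all_order all_algebra.
From mathcomp Require Import all_classical all_reals all_analysis.
From mathcomp Require Import ring lra zify.
From Stdlib Require Import Lia.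
Import numFieldNormedType.Exports.
Import Order.TTheory GRing.Theory Num.Theory.
Local Open Scope classical_set_scope.
Local Open Scope ring_scope.

Lemma norm_le_enorm (R : realType) (d : nat) (v : 'rV[R]_d) : `|v| <= enorm v.
Proof.
rewrite /Num.norm /= mx_normrE.
apply: bigmax_le; first by rewrite /enorm sqrtr_ge0.
move=> [a j] _ /=; rewrite (ord1 a) /enorm.
rewrite -(sqrtr_sqr (v ord0 j)) ler_sqrt ?sumr_ge0 // => [|k _]; last exact: sqr_ge0.
by rewrite (bigD1 j) //= lerDl sumr_ge0 // => k _; exact: sqr_ge0.
Qed.

Lemma comp_seqS (R : realType) (d : nat) (M : Type)
  (w : M -> 'rV[R]_d -> 'rV[R]_d) (i : nat -> M) n x :
  comp_seq w i n.+1 x = comp_seq w i n (w (i n) x).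
Proof. by rewrite /comp_seq -[n.+1]addn1 iotaD /= foldr_cat. Qed.

Lemma comp_seqX (R : realType) (d : nat) (M : Type) (X : set 'rV[R]_d)
  (w : M -> 'rV[R]_d -> 'rV[R]_d) (i : nat -> M) :
  (forall m x, X x -> X (w m x)) -> forall n x, X x -> X (comp_seq w i n x).
Proof.
move=> Xw; elim=> [|n IH] x Xx; first by [].
by rewrite comp_seqS; apply: IH; apply: Xw.
Qed.

Lemma comp_lip (R : realType) (d : nat) (M : Type) (X : set 'rV[R]_d)
  (w : M -> 'rV[R]_d -> 'rV[R]_d) (i : nat -> M) (G : M -> R) :
  (forall m x, X x -> X (w m x)) ->
  (forall m, 0 <= G m) ->
  (forall m x y, X x -> X y -> enorm (w m x - w m y) <= G m * enorm (x - y)) ->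
  forall n x y, X x -> X y ->
  enorm (comp_seq w i n x - comp_seq w i n y) <=
    (\prod_(k < n) G (i k)) * enorm (x - y).
Proof.
move=> Xw G0 L; elim=> [|n IH] x y Xx Xy.
  by rewrite big_ord0 mul1r.
rewrite !comp_seqS; apply: le_trans (IH _ _ (Xw _ _ Xx) (Xw _ _ Xy)) _.
rewrite big_ord_recr /= -mulrA ler_wpM2l //; first by apply: prodr_ge0.
exact: L.
Qed.

Lemma normed_cvg_mx (R : realType) (d : nat) (u_ : nat -> 'rV[R]_d) :
  cvgn [normed series u_] -> cvgn (series u_).
Proof.
move=> /cauchy_cvgP/cauchy_seriesP u_ncvg.
apply/cauchy_cvgP/cauchy_seriesP => e /u_ncvg.
apply: filterS => n /=; rewrite ger0_norm ?sumr_ge0//.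
by apply: le_lt_trans; apply: ler_norm_sum.
Qed.

Theorem lemma2p1 (R : realType) (d : nat) (M : pointedType)
  (X : set 'rV[R]_d) (w : M -> 'rV[R]_d -> 'rV[R]_d)
  (p gam Gam : M -> R) (x0 : 'rV[R]_d)
  (P : probability (symb_space M) R) :
  (* M finite or countably infinite *)
  countable [set: M] ->
  (* each w_i maps X into X *)
  (forall m x, X x -> X (w m x)) ->
  (* p is a probability vector with positive entries *)
  (forall m, 0 < p m) ->
  (\esum_(m in [set: M]) (p m)%:E = 1)%E ->
  (* bi-Lipschitz *)
  (forall m, 0 < gam m < Gam m) ->
  (forall m x y, X x -> X y ->
     gam m * enorm (x - y) <= enorm (w m x - w m y) <= Gam m * enorm (x - y)) ->
  (* average contractivity, witnessed at x0 *)
  X x0 ->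
  (\esum_(m in [set: M]) (p m * Gam m)%R%:E < +oo)%E ->
  (\esum_(m in [set: M]) (p m * enorm (w m x0 - x0))%R%:E < +oo)%E ->
  (-oo < esumR (fun m => (p m * ln (Gam m))%R) < 0)%E ->
  (* finite entropy *)
  (-oo < esumR (fun m => (p m * ln (p m))%R))%E ->
  (* P is the product (Bernoulli) measure p^{\otimes N} *)
  (forall a : seq M, P (cylinder a) = (\prod_(m <- a) p m)%:E) ->
  forall i : nat -> M, Sset w p Gam x0 P i ->
  exists l : 'rV[R]_d, forall x, X x -> comp_seq w i n x @[n --> \oo] --> l.
Proof.
move=> _ Xw _ _ gG Lip Xx0 _ _ Hmu _ _ i [[[_ Hb] Hs] _].
have Gpos m : 0 < Gam m by case/andP: (gG m) => g0 gG'; apply: lt_trans gG'.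
have L m x y : X x -> X y -> enorm (w m x - w m y) <= Gam m * enorm (x - y).
  by move=> Xx Xy; case/andP: (Lip m x y Xx Xy).
have enorm0 (v : 'rV[R]_d) : 0 <= enorm v by rewrite /enorm sqrtr_ge0.
set mu := mean p (fun m => ln (Gam m)) in Hs.
have mu_lt0 : mu < 0.
  move: Hmu; rewrite /mu /mean /=.
  by case: (esumR _) => [r||] //=; rewrite lte_fin => /andP[].
set nu := mean p (fun m => enorm (w m x0 - x0)) in Hb.
have mu2 : mu < mu / 2 by lra.
have [N1 _ HN1] := cvgr_lt _ Hs (mu / 2) mu2.
have nu1 : nu < `|nu| + 1 by have := ler_norm nu; lra.
have [N2 _ HN2] := cvgr_lt _ Hb (`|nu| + 1) nu1.
set Pi := fun n => \prod_(k < n) Gam (i k).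
set b := fun k => enorm (w (i k) x0 - x0).
set C := `|nu| + 1.
have C0 : 0 < C by rewrite /C; have := normr_ge0 nu; lra.
have Pi0 n : 0 <= Pi n by apply: prodr_ge0 => k _; apply: ltW.
have PiE n : Pi n = expR (\sum_(k < n) ln (Gam (i k))).
  by rewrite expR_sum; apply: eq_bigr => k _; rewrite lnK // posrE.
set N := maxn (maxn N1 N2) 1.
have HsN n : (N <= n)%N -> \sum_(k < n) ln (Gam (i k)) <= mu / 2 * n%:R.
  move=> Hn; have n0 : 0 < n%:R :> R by rewrite ltr0n; lia.
  have := HN1 n ltac:(rewrite /=; lia).
  by rewrite ltr_pdivrMr // => /ltW.
have HbN n : (N <= n)%N -> b n <= C * n.+1%:R.
  move=> Hn; have n0 : 0 < n.+1%:R :> R by rewrite ltr0n.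
  have := HN2 n.+1 ltac:(rewrite /=; lia).
  rewrite ltr_pdivrMr // big_ord_recr /= => H; apply: ltW; apply: le_lt_trans H.
  by rewrite lerDr sumr_ge0.
set r := expR (mu / 4).
have r0 : 0 < r by apply: expR_gt0.
have r1 : r < 1 by rewrite /r expR_lt1; lra.
set a := - mu / 4.
have a0 : 0 < a by rewrite /a; lra.
set K := C * expR a / a.
have K0 : 0 <= K by rewrite /K divr_ge0 ?mulr_ge0 ?expR_ge0 //; lra.
have HPi n : (N <= n)%N -> Pi n <= r ^+ n.
  move=> Hn; rewrite PiE /r -expRM_natr ler_expR; apply: le_trans (HsN _ Hn) _.
  by rewrite ler_wpM2r ?ler0n //; lra.
have HPib n : (N <= n)%N -> Pi n * b n <= K * r ^+ n.
  move=> Hn; rewrite PiE.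
  have e1 : n.+1%:R <= expR (a * n.+1%:R) / a.
    rewrite ler_pdivlMr //; have := expR_ge1Dx (a * n.+1%:R); lra.
  apply: (@le_trans _ _ (expR (mu / 2 * n%:R) * (C * (expR (a * n.+1%:R) / a)))).
    apply: ler_pM; rewrite ?expR_ge0 ?enorm0 // ?ler_expR ?HsN //.
    by apply: le_trans (HbN _ Hn) _; rewrite ler_wpM2l //; lra.
  rewrite /K /r -expRM_natr mulrA (mulrC _ C) -!mulrA; rewrite le_eqVlt; apply/orP; left; apply/eqP; congr (_ * _).
  rewrite mulrCA !mulrA -expRD [RHS]mulrAC -expRD; congr (expR _ * _).
  by rewrite /a -natr1; field.
set u := fun j => comp_seq w i j x0.
have Hdelta n : `|telescope u n| <= Pi n * b n.
  apply: le_trans (norm_le_enorm _ _ _) _.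
  rewrite /telescope /u /= comp_seqS.
  exact: (comp_lip _ _ _ _ _ _ _ Xw (fun m => ltW (Gpos m)) L _ _ _ (Xw _ _ Xx0) Xx0).
set K' := K + \sum_(k < N) `|telescope u k| / r ^+ k.
have rn0 n : 0 < r ^+ n by apply: exprn_gt0.
have Hall n : `|telescope u n| <= K' * r ^+ n.
  have S0 : 0 <= \sum_(k < N) `|telescope u k| / r ^+ k.
    by apply: sumr_ge0 => k _; apply: divr_ge0 => //; apply: ltW.
  case: (leqP N n) => Hn.
    apply: le_trans (Hdelta n) _; apply: le_trans (HPib n Hn) _.
    apply: ler_wpM2r; first exact: ltW.
    rewrite /K'; lra.
  rewrite -ler_pdivrMr // /K' (bigD1 (Ordinal Hn)) //=.
  have S1 : 0 <= \sum_(k < N | k != Ordinal Hn) `|telescope u k| / r ^+ k.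
    by apply: sumr_ge0 => k _; apply: divr_ge0 => //; apply: ltW.
  lra.
have cs : cvgn (series (telescope u)).
  apply: normed_cvg_mx.
  apply: (@series_le_cvg _ _ (geometric K' r)).
  - by move=> n; apply: normr_ge0.
  - move=> n /=; apply: mulr_ge0; last by apply: ltW.
    rewrite /K'; apply: addr_ge0 => //.
    by apply: sumr_ge0 => k _; apply: divr_ge0 => //; apply: ltW.
  - exact: Hall.
  - by apply: is_cvg_geometric_series; rewrite gtr0_norm.
move: cs; rewrite telescopeK => cs.
set l := limn [sequence u j - u 0%N]_j + u 0%N.
have cu : u @ \oo --> l.
  have -> : u = (fun j => [sequence u j - u 0%N]_j j + u 0%N).
    by apply/funext => j /=; rewrite subrK.
  by apply: cvgD => //; exact: cvg_cst.
exists l => x Xx.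
have -> : (fun j => comp_seq w i j x) = (fun j => (comp_seq w i j x - u j) + u j).
  by apply/funext => j; rewrite subrK.
rewrite -[l]add0r; apply: cvgD => //.
apply: norm_cvg0.
apply: (@squeeze_cvgr _ _ _ _ (fun _ => 0) (fun j => enorm (x - x0) * r ^+ j)).
- exists N => // j /= Hj; rewrite normr_ge0 /=.
  apply: le_trans (norm_le_enorm _ _ _) _.
  apply: le_trans (comp_lip _ _ _ _ _ _ _ Xw (fun m => ltW (Gpos m)) L _ _ _ Xx Xx0) _.
  by rewrite mulrC ler_wpM2l // HPi.
- exact: cvg_cst.
- by apply: cvg_geometric; rewrite gtr0_norm.
Qed.
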